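(* For a biconnected $K_4$-minor-free graph $G$, the following statements are equivalent: (1) For some $v\in V(G)$, $G$ has a $1$-perfect orientation in which $v$ is a sink. (2) For every $v\in V(G)$, $G$ has a $1$-perfect orientation in which $v$ is a sink. (3) $G$ is chordal. (4) $G$ is either $K_1$ or a $2$-tree.
   Context: A graph is biconnected if it is connected and has no cut vertex. An orientation of $G$ is $1$-perfect if for every vertex the out-neighborhood is a clique in $G$. A sink is a vertex of out-degree $0$. A graph is chordal if it has no induced cycle of length at least $4$. $2$-trees: $K_2$ is a $2$-tree, and adding to a $2$-tree a new vertex adjacent to exactly two adjacent vertices yields a $2$-tree; there are no others. *)

(* Defs.v *)
From mathcomp Require Import all_boot.
Set Implicit Arguments. Unset Strict Implicit. Unset Printing Implicit Defensive.

Section Graphs.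
Variable T : finType.

Definition simple_graph (e : rel T) : Prop := symmetric e /\ irreflexive e.

Definition induced_connected (e : rel T) (B : {set T}) : Prop :=
  B != set0 /\
  forall x y, x \in B -> y \in B ->
    connect (fun a b => [&& e a b, a \in B & b \in B]) x y.

Definition connected_graph (e : rel T) : Prop := induced_connected e [set: T].

Definition cut_vertex (e : rel T) (v : T) : Prop :=
  exists x y, [/\ x != v, y != v &
    ~~ connect (fun a b => [&& e a b, a != v & b != v]) x y].

Definition biconnected (e : rel T) : Prop :=
  connected_graph e /\ forall v, ~ cut_vertex e v.

Definition has_K4_minor (e : rel T) : Prop :=
  exists B : 'I_4 -> {set T},
    [/\ forall i, induced_connected e (B i),
        forall i j, i != j -> [disjoint B i & B j] &
        forall i j, i != j -> exists x y, [/\ x \in B i, y \in B j & e x y]].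

Definition orientation (e o : rel T) : Prop :=
  (forall x y, e x y = o x y || o y x) /\ (forall x y, ~~ (o x y && o y x)).

Definition one_perfect (e o : rel T) : Prop :=
  orientation e o /\
  forall v x y, o v x -> o v y -> x != y -> e x y.

Definition sink (o : rel T) (v : T) : Prop := forall y, ~~ o v y.

Definition induced_cycle (e : rel T) (s : seq T) : Prop :=
  [/\ uniq s, 4 <= size s &
      forall i j, i < size s -> j < size s ->
        forall x0 : T,
        e (nth x0 s i) (nth x0 s j) = ((j == (i.+1 %% size s)) || (i == (j.+1 %% size s)))].

Definition chordal (e : rel T) : Prop := forall s, ~ induced_cycle e s.

(* 2-trees, built on vertex sets V (the graph being the induced subgraph G[V]). *)
Inductive two_tree_on (e : rel T) : {set T} -> Prop :=
  | tt_base x y : x != y -> e x y -> two_tree_on e [set x; y]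
  | tt_step V x y z : two_tree_on e V -> x \in V -> y \in V -> e x y ->
      z \notin V -> (forall w, w \in V -> e z w = (w == x) || (w == y)) ->
      two_tree_on e (z |: V).

Definition two_tree (e : rel T) : Prop := two_tree_on e [set: T].

Definition is_K1 : Prop := #|T| = 1.

End Graphs.

(* Main.v *)
Require Import Defs.
From mathcomp Require Import all_boot.
From mathcomp Require Import zify.
Set Implicit Arguments. Unset Strict Implicit. Unset Printing Implicit Defensive.
Set Warnings "-notation-overridden".

Section Work.
Variable T : finType.
Variable e : rel T.
Hypothesis esym : symmetric e.
Hypothesis eirr : irreflexive e.

Definition rV (U : {set T}) : rel T := fun a b => [&& e a b, a \in U & b \in U].

Lemma rV_sym U : symmetric (rV U).
Proof. by move=> a b; rewrite /rV esym; case: (a \in U); case: (b \in U); rewrite ?andbF. Qed.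

Lemma connect_fpath (r : rel T) x y : connect r x y ->
  exists (p : nat -> T) m, [/\ p 0 = x, p m = y & forall i, i < m -> r (p i) (p i.+1)].
Proof.
move/connectP=> [s Hp ->].
exists (fun i => nth x (x :: s) i), (size s); split => //.
- by have := nth_last x (x :: s).
- by move=> i Hi; have := (pathP x Hp) i Hi.
Qed.

Lemma fpath_connect (r : rel T) (p : nat -> T) m :
  (forall i, i < m -> r (p i) (p i.+1)) -> connect r (p 0) (p m).
Proof.
elim: m => [|m IH] H; first exact: connect0.
apply: connect_trans (IH _) (connect1 (H m _)) => // i Hi; apply: H; lia.
Qed.

Lemma connect_exit (r : rel T) (K : {set T}) x y : connect r x y -> x \in K -> y \notin K ->
  exists a b, [/\ a \in K, b \notin K & r a b].
Proof.
move/connectP=> [s]; elim: s x => [|c s IH] x /=; first by move=> _ -> ->.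
case/andP=> rxc Hp Hy xK; case cK: (c \in K).
- exact: IH Hp Hy cK.
- by exists x, c; rewrite cK.
Qed.

Lemma connect_in U a b : connect (rV U) a b -> a \in U -> b \in U.
Proof.
move/connectP=> [s]; elim: s a => [|c s IH] a /=; first by move=> _ -> ->.
by case/andP=> /and3P[_ _ cU] Hp Hy _; apply: IH Hp Hy cU.
Qed.

Lemma connect_closedV U (W : {set T}) a b : connect (rV U) a b -> a \in W ->
  (forall x y, x \in W -> rV U x y -> y \in W) -> connect (rV W) a b.
Proof.
move/connectP=> [s]; elim: s a => [|c s IH] a /=; first by move=> _ -> *; exact: connect0.
case/andP=> Hac Hp Hy aW Hcl.
have cW := Hcl _ _ aW Hac.
apply: connect_trans (connect1 _) (IH _ Hp Hy cW Hcl).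
by move: Hac; rewrite /rV => /and3P[-> _ _]; rewrite aW cW.
Qed.

Lemma connect_mono U (W : {set T}) a b : connect (rV U) a b -> U \subset W -> connect (rV W) a b.
Proof.
move=> H sUW; apply: connect_sub H => x y /and3P[exy xU yU].
by apply: connect1; rewrite /rV exy (subsetP sUW _ xU) (subsetP sUW _ yU).
Qed.


Lemma mkK4 (B0 B1 B2 B3 : {set T}) :
  induced_connected e B0 -> induced_connected e B1 ->
  induced_connected e B2 -> induced_connected e B3 ->
  [disjoint B0 & B1] -> [disjoint B0 & B2] -> [disjoint B0 & B3] ->
  [disjoint B1 & B2] -> [disjoint B1 & B3] -> [disjoint B2 & B3] ->
  (exists x y, [/\ x \in B0, y \in B1 & e x y]) ->
  (exists x y, [/\ x \in B0, y \in B2 & e x y]) ->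
  (exists x y, [/\ x \in B0, y \in B3 & e x y]) ->
  (exists x y, [/\ x \in B1, y \in B2 & e x y]) ->
  (exists x y, [/\ x \in B1, y \in B3 & e x y]) ->
  (exists x y, [/\ x \in B2, y \in B3 & e x y]) ->
  has_K4_minor e.
Proof.
move=> c0 c1 c2 c3 d01 d02 d03 d12 d13 d23 a01 a02 a03 a12 a13 a23.
have As : forall X Y : {set T}, (exists x y, [/\ x \in X, y \in Y & e x y]) ->
    exists x y, [/\ x \in Y, y \in X & e x y].
  by move=> X Y [x [y [? ? ?]]]; exists y, x; rewrite esym.
exists (fun i : 'I_4 => nth set0 [:: B0; B1; B2; B3] i); split.
- by case=> [[|[|[|[|i]]]] Hi].
- case=> [[|[|[|[|i]]]] Hi] //; case=> [[|[|[|[|j]]]] Hj] //= _; rewrite disjoint_sym; assumption.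
- case=> [[|[|[|[|i]]]] Hi] //; case=> [[|[|[|[|j]]]] Hj] //= _; try done; exact: As.
Qed.

Lemma ic1 x : induced_connected e [set x].
Proof.
split; first by apply/set0Pn; exists x; rewrite inE.
by move=> a b; rewrite !inE => /eqP-> /eqP->; exact: connect0.
Qed.


Definition cyc (h : nat -> T) k := [/\ 4 <= k, (forall j, h (j + k) = h j),
  (forall j, e (h j) (h j.+1)),
  (forall i j, i + 2 <= j -> j + 2 <= i + k -> ~~ e (h i) (h j)) &
  (forall i j, i < j -> j < i + k -> h i != h j)].

Lemma cyc_shift h k a : cyc h k -> cyc (fun j => h (a + j)) k.
Proof.
case=> k4 per ed ne di; split => //.
- by move=> j; rewrite addnA per.
- by move=> j; rewrite addnS; exact: ed.
- move=> i j H1 H2; apply: ne; lia.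
- move=> i j H1 H2; apply: di; lia.
Qed.

Lemma cyc_nb h k : cyc h k ->
  forall j, 0 < j -> j < k -> ~~ e (h j.-1) (h j.+1) && (h j.-1 != h j.+1).
Proof.
case=> k4 per ed ne di j j0 jk; rewrite ne ?di //; lia.
Qed.

Lemma pathdir o (p : nat -> T) m : one_perfect e o ->
  (forall i, i < m -> e (p i) (p i.+1)) ->
  (forall j, 0 < j -> j < m -> ~~ e (p j.-1) (p j.+1) && (p j.-1 != p j.+1)) ->
  o (p 1) (p 0) -> forall j, j < m -> o (p j.+1) (p j).
Proof.
move=> [[eo anti] cl] He Hn H0; elim=> [//|j IH] Hj.
have {}IH := IH (ltnW Hj).
have := He _ Hj; rewrite eo => /orP[H|//].
have := Hn j.+1 isT Hj => /andP[/negP nE dif].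
by case: nE; apply: (cl _ _ _ IH H).
Qed.

Lemma outcyc o h k : one_perfect e o -> cyc h k ->
  (o (h 0) (h 1) /\ o (h 1) (h 2)) \/ (o (h k) (h (k - 1)) /\ o (h (k - 1)) (h (k - 2))).
Proof.
move=> op hc; have [k4 per ed ne di] := hc.
have [[eo anti] cl] := op.
have := ed 0; rewrite eo => /orP[H01|H10].
- left; split => //.
  have := ed 1; rewrite eo => /orP[//|H21]; exfalso.
  have hc1 := cyc_shift 1 hc.
  have [_ _ ed1 _ _] := hc1.
  have := @pathdir o (fun j => h (1 + j)) k op (fun i _ => ed1 i) (cyc_nb hc1) H21 (k - 1).
  have -> : (k - 1).+1 = k by lia.
  have -> : 1 + (k - 1) = 0 + k by lia.
  rewrite !per => H; have := anti (h 0) (h 1).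
  by rewrite H01 H.
- right.
  have P := @pathdir o h k op (fun i _ => ed i) (cyc_nb hc) H10.
  have := P (k - 1); have -> : (k - 1).+1 = k by lia.
  have := P (k - 2); have -> : (k - 2).+1 = k - 1 by lia.
  move=> A B; split; [apply: B|apply: A]; lia.
Qed.

Lemma keystep o w X Y Z : one_perfect e o -> o X Y -> o Y Z -> o X w ->
  w != Y -> w != Z -> ~~ (e w Y && e w Z) -> o w Y.
Proof.
move=> [[eo anti] cl] XY YZ Xw wY wZ nK.
have eY : e w Y by apply: (cl X).
have := eY; rewrite eo => /orP[//|Yw].
have eZ : e w Z by apply: (cl Y).
by move: nK; rewrite eY eZ.
Qed.

Lemma cycK4 h k w : cyc h k -> (forall j, w != h j) ->
  e w (h 0) -> e w (h 1) -> e w (h 2) -> has_K4_minor e.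
Proof.
move=> hc wn w0 w1 w2; have [k4 per ed ne di] := hc.
pose B3 := [set x | [exists j : 'I_k, (2 <= j) && (x == h j)]].
have hB : forall j, 2 <= j -> j < k -> h j \in B3.
  by move=> j j2 jk; rewrite inE; apply/existsP; exists (Ordinal jk); rewrite j2 eqxx.
have iB : forall x, x \in B3 -> exists2 j, (2 <= j) && (j < k) & x = h j.
  move=> x; rewrite inE => /existsP[j /andP[j2 /eqP ->]]; exists j => //.
  by rewrite j2 ltn_ord.
have cj : forall j, 2 <= j -> j < k -> connect (rV B3) (h 2) (h j).
  elim=> [//|j IH] j2 jk.
  case: (ltngtP j 2) => [jl|jg|->]; first (by have -> : j = 1 by lia; exact: connect0).
  - apply: connect_trans (IH (ltnW jg) (ltnW jk)) (connect1 _).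
    by rewrite /rV ed !hB //; lia.
  - by apply: connect1; rewrite /rV ed !hB //; lia.
have cB : induced_connected e B3.
  split; first by apply/set0Pn; exists (h 2); apply: hB => //; lia.
  move=> x y /iB[i /andP[i2 ik] ->] /iB[j0 /andP[j2 jk] ->].
  have cs := sym_connect_sym (rV_sym B3).
  apply: (@connect_trans _ _ (h 2)); last exact: cj.
  by rewrite cs; exact: cj.
apply: (mkK4 (ic1 w) (ic1 (h 0)) (ic1 (h 1)) cB).
- by rewrite disjoints1 inE; exact: wn.
- by rewrite disjoints1 inE; exact: wn.
- by rewrite disjoints1; apply/negP => /iB[j _ /eqP]; rewrite (negbTE (wn j)).
- rewrite disjoints1 inE; apply: di => //; lia.
- rewrite disjoints1; apply/negP => /iB[j /andP[j2 jk] /eqP]; apply/negP; apply: di; lia.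
- rewrite disjoints1; apply/negP => /iB[j /andP[j2 jk] /eqP]; apply/negP; apply: di; lia.
- by exists w, (h 0); rewrite !inE eqxx.
- by exists w, (h 1); rewrite !inE eqxx.
- by exists w, (h 2); split; [rewrite inE | apply: hB => //; lia | ].
- by exists (h 0), (h 1); rewrite !inE eqxx.
- exists (h 0), (h (k - 1)); split; [by rewrite inE | apply: hB; lia | ].
  have := ed (k - 1); have -> : (k - 1).+1 = 0 + k by lia.
  by rewrite per esym.
- by exists (h 1), (h 2); split; [rewrite inE | apply: hB => //; lia | ].
Qed.


Lemma mod2 x k : 0 < k -> x < k + k -> (x %% k = x /\ x < k) \/ (x %% k = x - k /\ k <= x).
Proof.
move=> k0 xk; case: (ltnP x k) => H; first by left; rewrite modn_small.
right; split => //; have -> : x = (x - k) + k by lia.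
by rewrite modnDr modn_small; lia.
Qed.

Lemma P1P3 : connected_graph e -> ~ has_K4_minor e ->
  (exists v o, one_perfect e o /\ sink o v) -> chordal e.
Proof.
move=> Hc HK [v [o [op snk]]] s [us k4 Hs].
have [[eo anti] cl] := op.
set k := size s in k4 Hs.
pose h j := nth v s (j %% k).
have k0 : 0 < k by lia.
have per : forall j, h (j + k) = h j by move=> j; rewrite /h modnDr.
have perq : forall j q, h (j + q * k) = h j.
  by move=> j; elim=> [|q IH]; rewrite ?addn0 // mulSnr addnA per.
have red : forall i x, h (i + x) = h (i %% k + x).
  by move=> i x; rewrite {1}(divn_eq i k) -addnA addnC perq.
have hr : forall r, r < k -> h r = nth v s r by move=> r rk; rewrite /h modn_small.
have hc : cyc h k.
  split => //.
  - move=> j; rewrite /h Hs ?ltn_pmod //; apply/orP; left; apply/eqP.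
    by rewrite -[j.+1]addn1 -[(j %% k).+1]addn1 modnDml.
  - move=> i j H1 H2; have -> : j = i + (j - i) by lia.
    rewrite red; have -> : h i = h (i %% k + 0) by rewrite -red addn0.
    rewrite addn0.
    have rk := ltn_pmod i k0; move: (i %% k) rk => r rk.
    rewrite hr // /h Hs ?ltn_pmod //.
    have [[-> ?]|[-> ?]] := @mod2 (r + (j - i)) k k0 ltac:(lia).
    + have [[-> ?]|[-> ?]] := @mod2 r.+1 k k0 ltac:(lia);
      (have [[-> ?]|[-> ?]] := @mod2 (r + (j - i)).+1 k k0 ltac:(lia)); lia.
    + have [[-> ?]|[-> ?]] := @mod2 r.+1 k k0 ltac:(lia);
      (have [[-> ?]|[-> ?]] := @mod2 (r + (j - i) - k).+1 k k0 ltac:(lia)); lia.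
  - move=> i j H1 H2; have -> : j = i + (j - i) by lia.
    rewrite red; have -> : h i = h (i %% k + 0) by rewrite -red addn0.
    rewrite addn0.
    have rk := ltn_pmod i k0; move: (i %% k) rk => r rk.
    rewrite hr // /h nth_uniq ?ltn_pmod //.
    have [[-> ?]|[-> ?]] := @mod2 (r + (j - i)) k k0 ltac:(lia); lia.
have hin : forall j, h j \in s by move=> j; rewrite /h mem_nth // ltn_pmod.
have hidx : forall x, x \in s -> x = h (index x s).
  by move=> x xs; rewrite /h modn_small ?index_mem // nth_index.
have [k4' per' ed ne di] := hc.
have key : forall w c, c \in s -> w \notin s -> o c w -> e w c -> exists2 y, y \in s & o w y.
  move=> w c cs ws cw wc.
  have wn : forall j, w != h j by move=> j; apply/eqP => wj; move: ws; rewrite wj hin.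
  have gc := cyc_shift (index c s) hc.
  set g := (fun j => h (index c s + j)) in gc.
  have g0 : g 0 = c by rewrite /g addn0 -hidx.
  have wg : forall j, w != g j by move=> j; apply: wn.
  have [gk4 gper ged gne gdi] := gc.
  case: (outcyc op gc) => [[X1 X2]|[X1 X2]].
  - exists (g 1); first exact: hin.
    apply: (keystep op X1 X2); rewrite ?g0 //.
    apply/negP => /andP[e1 e2]; apply: HK; apply: (cycK4 gc wg) => //; by rewrite g0.
  - exists (g (k - 1)); first exact: hin.
    have gkc : g k = c by rewrite -g0 -(add0n k) gper.
    apply: (keystep op X1 X2); rewrite ?gkc //.
    apply/negP => /andP[e1 e2]; apply: HK.
    have gc2 := cyc_shift (k - 2) gc.
    apply: (cycK4 gc2 (w := w)) => /=.
    + by move=> j; apply: wg.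
    + by rewrite addn0.
    + by have -> : k - 2 + 1 = k - 1 by lia.
    + have -> : k - 2 + 2 = k by lia.
      by rewrite gkc.
have vns : v \notin s.
  apply/negP => vs.
  have gc := cyc_shift (index v s) hc.
  set g := (fun j => h (index v s + j)) in gc.
  have g0 : g 0 = v by rewrite /g addn0 -hidx.
  have [gk4 gper ged gne gdi] := gc.
  case: (outcyc op gc) => [[X1 X2]|[X1 X2]].
  - by move: (snk (g 1)); rewrite -g0 X1.
  - have gkc : g k = v by rewrite -g0 -(add0n k) gper.
    by move: (snk (g (k - 1))); rewrite -gkc X1.
have [sv0 _] : v \in [set: T] /\ true by rewrite inE.
have main : forall m (p : nat -> T), p 0 = v -> p m \in s ->
    (forall i, i < m -> e (p i) (p i.+1)) -> False.
  elim/ltn_ind => m IH p p0 pm pe.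
  case: (boolP [exists i : 'I_m, p i \in s]) => [/existsP[i pi] | /existsPn nos].
    by apply: (IH i (ltn_ord i) p p0 pi) => l hl; apply: pe; apply: ltn_trans hl _.
  have nos' : forall i, i < m -> p i \notin s by move=> i im; exact: (nos (Ordinal im)).
  case: (boolP [exists j : 'I_m, (0 < j) && e (p j.-1) (p j.+1)]) =>
      [/existsP[j /andP[j0 ch]] | /existsPn noch].
    have jm := ltn_ord j.
    apply: (IH m.-1 _ (fun l => if l < j then p l else p l.+1)); first by lia.
    - by rewrite j0.
    - have -> : (m.-1 < j) = false by lia.
      by rewrite prednK //; lia.
    - move=> l lm; case: (ltngtP l.+1 j) => H.
      + apply: pe; lia.
      + apply: pe; lia.
      + by move: ch; rewrite -H.
  case: (boolP [exists j : 'I_m, (0 < j) && (p j.-1 == p j.+1)]) =>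
      [/existsP[j /andP[j0 /eqP eqj]] | /existsPn noeq].
    case: (ltngtP j.+1 m) => jm; [ | by have := ltn_ord j; lia |
      by move: (nos' j.-1 ltac:(lia)); rewrite eqj jm pm].
    apply: (IH (m - 2) _ (fun l => if l < j then p l else p l.+2)); first by lia.
    - by rewrite j0.
    - have -> : (m - 2 < j) = false by lia.
      by have -> : (m - 2).+2 = m by lia.
    - move=> l lm; case: (ltngtP l.+1 j) => H.
      + apply: pe; lia.
      + apply: pe; lia.
      + move: eqj; rewrite -H /= => ->; apply: pe; lia.
  have nb : forall j, 0 < j -> j < m -> ~~ e (p j.-1) (p j.+1) && (p j.-1 != p j.+1).
    move=> j j0 jm; have := noch (Ordinal jm); have := noeq (Ordinal jm).
    by rewrite /= j0 /= => -> ->.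
  clear nos noch noeq; case: m IH pm pe nos' nb => [|m] IH pm pe nos' nb.
    by move: pm; rewrite p0 (negbTE vns).
  have o10 : o (p 1) (p 0).
    have := pe 0 isT; rewrite eo p0 => /orP[H|//]; by move: (snk (p 1)); rewrite H.
  have pd := pathdir op pe nb o10.
  have [y ys wy] := key (p m) (p m.+1) pm (nos' m (ltnSn m)) (pd m (ltnSn m))
      (pe m (ltnSn m)).
  case: m IH pm pe nos' nb o10 pd wy => [|m] IH pm pe nos' nb o10 pd wy.
    by move: (snk y); rewrite -p0 wy.
  have pmy : e (p m) y.
    apply: (cl (p m.+1)) => //; first exact: pd.
    by apply/eqP => pmy; move: (nos' m ltac:(lia)); rewrite pmy ys.
  apply: (IH m.+1 (ltnSn _) (fun l => if l <= m then p l else y)) => //.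
  - by rewrite ltnn.
  - move=> l lm; case: (ltngtP l m) => H.
    + apply: pe; lia.
    + exfalso; lia.
    + by rewrite H.
have [c cs] : exists c, c \in s.
  by exists (nth v s 0); rewrite mem_nth //; lia.
have [p [m [p0 pm pe]]] := connect_fpath (proj2 Hc v c sv0 (in_setT c)).
apply: (main m p p0); first by rewrite pm.
by move=> i im; have := pe i im => /and3P[].
Qed.


End Work.

Section Work2.
Variable T : finType.
Variable e : rel T.
Hypothesis esym : symmetric e.
Hypothesis eirr : irreflexive e.
Definition po (V : {set T}) (o : rel T) := [/\ (forall x y, o x y -> (x \in V) && (y \in V)),
  (forall x y, x \in V -> y \in V -> e x y = o x y || o y x),
  (forall x y, ~~ (o x y && o y x)) &
  (forall p x y, o p x -> o p y -> x != y -> e x y)].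

Lemma po_step2 V o' b c z : po V o' -> b \in V -> c \in V -> z \notin V ->
  (forall w, w \in V -> e z w = (w == b) || (w == c)) ->
  (forall y, o' b y = false) -> (forall y, o' c y = (y == b)) ->
  exists o, [/\ po (z |: V) o, (forall y, o z y = false) & (forall y, o b y = (y == z))].
Proof.
move=> [o1 o2 o3 o4] bV cV zV Hz bs cb.
have nz : forall y, o' z y = false by move=> y; apply/negP => /o1 /andP[]; rewrite (negbTE zV).
have nz' : forall y, o' y z = false by move=> y; apply/negP => /o1 /andP[_]; rewrite (negbTE zV).
have zb : (z == b) = false by apply/eqP => zb; move: zV; rewrite zb bV.
have zc : (z == c) = false by apply/eqP => zc; move: zV; rewrite zc cV.
exists (fun p q => o' p q || ((q == z) && ((p == b) || (p == c)))); split.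
- split.
  + move=> x y /orP[/o1/andP[xV yV]|/andP[/eqP-> /orP[/eqP->|/eqP->]]];
      by rewrite !inE ?xV ?yV ?bV ?cV ?eqxx ?orbT.
  + move=> x y; rewrite !inE => /orP[/eqP->|xV] /orP[/eqP->|yV].
    * by rewrite eirr nz eqxx zb zc.
    * have yz : (y == z) = false by apply/eqP=> yz; move: zV; rewrite -yz yV.
      by rewrite Hz // nz nz' yz eqxx /=.
    * have xz : (x == z) = false by apply/eqP=> xz; move: zV; rewrite -xz xV.
      by rewrite esym Hz // nz nz' xz eqxx /= orbF.
    * have yz : (y == z) = false by apply/eqP=> yz; move: zV; rewrite -yz yV.
      have xz : (x == z) = false by apply/eqP=> xz; move: zV; rewrite -xz xV.
      by rewrite o2 // xz yz /= ?orbF.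
  + move=> x y; apply/negP => /andP[H1 H2].
    case: (eqVneq x z) => [xz|xz].
      by move: H1; rewrite xz nz zb zc /= andbF.
    case: (eqVneq y z) => [yz|yz].
      by move: H2; rewrite yz nz zb zc /= andbF.
    move: H1 H2; rewrite (negbTE xz) (negbTE yz) /= ?orbF => H1 H2.
    by have := o3 x y; rewrite H1 H2.
  + move=> p x y; case: (eqVneq p b) => [->|pb].
      rewrite /= !bs /= ?andbT => /eqP-> /eqP->; by rewrite eqxx.
    case: (eqVneq p c) => [->|pc].
      rewrite /= !cb ?andbT.
      move=> /orP[/eqP->|/eqP->] /orP[/eqP->|/eqP->]; rewrite ?eqxx // => _.
      * by rewrite esym Hz // eqxx.
      * by rewrite Hz // eqxx.
    rewrite /= ?andbF ?orbF; exact: o4.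
- by move=> y; rewrite nz zb zc /= andbF.
- by move=> y; rewrite bs eqxx /= andbT.
Qed.


Lemma po_step3 V o' a c z : po V o' -> a \in V -> c \in V -> e a c -> z \notin V ->
  (forall w, w \in V -> e z w = (w == a) || (w == c)) ->
  (forall y, o' a y = false) -> (forall y, o' c y = (y == a)) ->
  exists o, [/\ po (z |: V) o, (forall y, o a y = false) & (forall y, o z y = (y == a))].
Proof.
move=> [o1 o2 o3 o4] aV cV eac zV Hz as_ ca.
have nz : forall y, o' z y = false by move=> y; apply/negP => /o1 /andP[]; rewrite (negbTE zV).
have nz' : forall y, o' y z = false by move=> y; apply/negP => /o1 /andP[_]; rewrite (negbTE zV).
have za : (z == a) = false by apply/eqP => zb; move: zV; rewrite zb aV.
have zc : (z == c) = false by apply/eqP => zc; move: zV; rewrite zc cV.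
have ac : (a == c) = false by apply/eqP => ac; move: eac; rewrite ac eirr.
have az : (a == z) = false by rewrite eq_sym.
have cz : (c == z) = false by rewrite eq_sym.
exists (fun p q => [|| o' p q, (p == z) && (q == a) | (p == c) && (q == z)]); split.
- split.
  + move=> x y /or3P[/o1/andP[xV yV]|/andP[/eqP-> /eqP->]|/andP[/eqP-> /eqP->]];
      by rewrite !inE ?xV ?yV ?aV ?cV ?eqxx ?orbT.
  + move=> x y; rewrite !inE => /orP[/eqP->|xV] /orP[/eqP->|yV].
    * by rewrite eirr nz eqxx za zc.
    * have yz : (y == z) = false by apply/eqP=> yz; move: zV; rewrite -yz yV.
      rewrite Hz // nz nz' yz eqxx zc /= ?andbF ?andbT ?orbF.
      by case: (y == a); case: (y == c).
    * have xz : (x == z) = false by apply/eqP=> xz; move: zV; rewrite -xz xV.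
      rewrite esym Hz // nz nz' xz eqxx zc /= ?andbF ?andbT ?orbF.
      by case: (x == a); case: (x == c).
    * have yz : (y == z) = false by apply/eqP=> yz; move: zV; rewrite -yz yV.
      have xz : (x == z) = false by apply/eqP=> xz; move: zV; rewrite -xz xV.
      by rewrite o2 // xz yz /= ?andbF ?orbF.
  + move=> x y; apply/negP => /andP[H1 H2].
    case: (eqVneq x z) => [xz|xz].
      move: H1 H2; rewrite xz /= nz nz' eqxx zc za ?andbF ?andbT ?orbF /= => /eqP->.
      by rewrite ?ac ?az /= ?andbF ?orbF.
    case: (eqVneq y z) => [yz|yz].
      move: H1 H2; rewrite yz /= nz nz' eqxx zc za ?andbF ?andbT ?orbF /= => H1 /eqP xa.
      by move: H1; rewrite xa ?ac ?az /= ?andbF ?orbF.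
    move: H1 H2; rewrite /= (negbTE xz) (negbTE yz) /= ?andbF ?orbF => H1 H2.
    by have := o3 x y; rewrite H1 H2.
  + move=> p x y; case: (eqVneq p z) => [->|pz].
      rewrite /= !nz zc /= ?orbF => /eqP-> /eqP->; by rewrite eqxx.
    case: (eqVneq p c) => [->|pc].
      rewrite /= !ca.
      move=> /orP[/eqP->|/eqP->] /orP[/eqP->|/eqP->]; rewrite ?eqxx // => _.
      * by rewrite esym Hz // eqxx.
      * by rewrite Hz // eqxx.
    rewrite /= ?andbF ?orbF; exact: o4.
- by move=> y; rewrite as_ az ac.
- by move=> y; rewrite nz eqxx zc /= orbF.
Qed.

Lemma po_step1 V o' x y z : po V o' -> x \in V -> y \in V -> e x y -> z \notin V ->
  (forall w, w \in V -> e z w = (w == x) || (w == y)) ->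
  exists o, po (z |: V) o /\ (forall a q, a \in V -> o a q = o' a q).
Proof.
move=> [o1 o2 o3 o4] xV yV exy zV Hz.
have nz : forall y, o' z y = false by move=> y'; apply/negP => /o1 /andP[]; rewrite (negbTE zV).
have nz' : forall y, o' y z = false by move=> y'; apply/negP => /o1 /andP[_]; rewrite (negbTE zV).
have zx : (z == x) = false by apply/eqP => zb; move: zV; rewrite zb xV.
have zy : (z == y) = false by apply/eqP => zc; move: zV; rewrite zc yV.
exists (fun p q => o' p q || ((p == z) && ((q == x) || (q == y)))); split; last first.
  move=> a q aV; have az : (a == z) = false by apply/eqP=> az; move: zV; rewrite -az aV.
  by rewrite az orbF.
split.
- move=> a b /orP[/o1/andP[aV bV]|/andP[/eqP-> /orP[/eqP->|/eqP->]]];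
    by rewrite !inE ?aV ?bV ?xV ?yV ?eqxx ?orbT.
- move=> a b; rewrite !inE => /orP[/eqP->|aV] /orP[/eqP->|bV].
  + by rewrite eirr nz eqxx zx zy.
  + have bz : (b == z) = false by apply/eqP=> bz; move: zV; rewrite -bz bV.
    by rewrite Hz // nz nz' bz eqxx /= orbF.
  + have az : (a == z) = false by apply/eqP=> az; move: zV; rewrite -az aV.
    by rewrite esym Hz // nz nz' az eqxx /=.
  + have bz : (b == z) = false by apply/eqP=> bz; move: zV; rewrite -bz bV.
    have az : (a == z) = false by apply/eqP=> az; move: zV; rewrite -az aV.
    by rewrite o2 // az bz /= ?orbF.
- move=> a b; apply/negP => /andP[H1 H2].
  case: (eqVneq a z) => [az|az].
    by move: H2; rewrite az nz' zx zy /= andbF.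
  case: (eqVneq b z) => [bz|bz].
    by move: H1; rewrite bz nz' zx zy /= andbF.
  move: H1 H2; rewrite (negbTE az) (negbTE bz) /= ?orbF => H1 H2.
  by have := o3 a b; rewrite H1 H2.
- move=> p a b; case: (eqVneq p z) => [->|pz].
    rewrite /= !nz /=.
    move=> /orP[/eqP->|/eqP->] /orP[/eqP->|/eqP->]; rewrite ?eqxx // => _.
    by rewrite esym.
  rewrite /= ?andbF ?orbF; exact: o4.
Qed.

Lemma po_base x y a b : a \in [set x; y] -> b \in [set x; y] -> e a b ->
  exists o, [/\ po [set x; y] o, (forall q, o a q = false) & (forall q, o b q = (q == a))].
Proof.
move=> aV bV eab.
have ab : (a == b) = false by apply/eqP => ab; move: eab; rewrite ab eirr.
have ba : (b == a) = false by rewrite eq_sym.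
have two : forall p, p \in [set x; y] -> (p == a) || (p == b).
  move=> p; move: aV bV ab; rewrite !inE => /orP[]/eqP-> /orP[]/eqP->;
  rewrite ?eqxx // => _ /orP[]/eqP->; by rewrite ?eqxx ?orbT.
exists (fun p q => (p == b) && (q == a)); split;
  [split | by move=> q; rewrite ab | by move=> q; rewrite eqxx].
- by move=> p q /andP[/eqP-> /eqP->]; rewrite aV bV.
- move=> p q /two/orP[]/eqP-> /two/orP[]/eqP->; rewrite ?eirr ?eqxx ?ab ?ba //=.
  by rewrite esym.
- move=> p q; apply/negP => /andP[/andP[/eqP-> /eqP->] /andP[/eqP ab' _]].
  by move: ab; rewrite ab' eqxx.
- by move=> p q r /andP[_ /eqP->] /andP[_ /eqP->]; rewrite eqxx.
Qed.


Lemma tt_orient V : two_tree_on e V -> forall a b, a \in V -> b \in V -> e a b ->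
  exists o, [/\ po V o, (forall q, o a q = false) & (forall q, o b q = (q == a))].
Proof.
elim=> [x y xy exy | W x y z H IH xV yV exy zV Hz] a b.
- exact: po_base.
have eyx : e y x by rewrite esym.
have Hz' : forall w, w \in W -> e z w = (w == y) || (w == x).
  by move=> w wV; rewrite orbC; exact: Hz.
rewrite !inE => /orP[/eqP->|aV] /orP[/eqP->|bV] eab.
- by rewrite eirr in eab.
- have : (b == x) || (b == y) by rewrite -Hz.
  case/orP=> /eqP->.
  + have [o' [po' s' n']] := IH x y xV yV exy.
    exact: (po_step2 po' xV yV zV Hz s' n').
  + have [o' [po' s' n']] := IH y x yV xV eyx.
    exact: (po_step2 po' yV xV zV Hz' s' n').
- have : (a == x) || (a == y) by rewrite -Hz // esym.
  case/orP=> /eqP->.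
  + have [o' [po' s' n']] := IH x y xV yV exy.
    exact: (po_step3 po' xV yV exy zV Hz s' n').
  + have [o' [po' s' n']] := IH y x yV xV eyx.
    exact: (po_step3 po' yV xV eyx zV Hz' s' n').
- have [o' [po' s' n']] := IH a b aV bV eab.
  have [o [po1 tr]] := po_step1 po' xV yV exy zV Hz.
  by exists o; split => // q; rewrite tr.
Qed.

Lemma tt_nbr V : two_tree_on e V -> forall a, a \in V -> exists2 b, b \in V & e a b.
Proof.
elim=> [x y xy exy | W x y z H IH xV yV exy zV Hz] a.
- rewrite !inE => /orP[]/eqP->.
  + by exists y; rewrite ?inE ?eqxx ?orbT.
  + by exists x; rewrite ?inE ?eqxx // esym.
- rewrite !inE => /orP[/eqP->|aV].
  + by exists x; rewrite ?inE ?xV ?orbT // Hz // eqxx.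
  + by have [b bV eab] := IH a aV; exists b; rewrite ?inE ?bV ?orbT.
Qed.

Lemma P4P2 : is_K1 T \/ two_tree e -> forall v, exists o, one_perfect e o /\ sink o v.
Proof.
case=> [K1|tt] v.
- exists (fun _ _ => false); split; last by [].
  split; last by [].
  split => // x y; have /card1P[c Hc] : #|T| == 1 by rewrite K1.
  have := Hc x; have := Hc y; rewrite !inE => /(@Logic.eq_sym _ _ _)/eqP-> /(@Logic.eq_sym _ _ _)/eqP->.
  by rewrite eirr.
- have [b _ evb] := tt_nbr tt (in_setT v).
  have [o [[o1 o2 o3 o4] s n]] := tt_orient tt (in_setT v) (in_setT b) evb.
  exists o; split; last by move=> y; rewrite s.
  split => //; split => // x y; exact: o2.
Qed.

End Work2.

Ltac slia := repeat match goal with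
  | H : is_true (leq _ _) |- _ => revert H
  | H : is_true (~~ (leq _ _)) |- _ => revert H
  | H : @eq nat _ _ |- _ => revert H
  | H : (leq _ _) = _ |- _ => revert H
  end; clear; intros; lia.

Section Work3.
Variable T : finType.
Variable e : rel T.
Hypothesis esym : symmetric e.
Hypothesis eirr : irreflexive e.
Local Notation rV := (rV e).

Definition bicon (V : {set T}) := [/\ V != set0,
  (forall x y, x \in V -> y \in V -> connect (rV V) x y) &
  (forall w x y, x \in V -> y \in V -> x != w -> y != w -> connect (rV (V :\ w)) x y)].

Definition comp (V : {set T}) s t (K : {set T}) := [/\
  (forall x, x \in K -> [&& x \in V, x != s & x != t]),
  induced_connected e K &
  (forall x y, x \in K -> y \in V -> e x y -> [|| y \in K, y == s | y == t])].

Lemma comp_swap V s t K : comp V s t K -> comp V t s K.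
Proof.
case=> Kin Kc Kcl; split => //.
- by move=> x /Kin /and3P[-> -> ->].
- move=> x y xK yV exy; have := Kcl x y xK yV exy.
  by case: (y \in K); case: (y == s); case: (y == t).
Qed.

Lemma comp_adj V s t K : bicon V -> s \in V -> t \in V -> s != t -> comp V s t K ->
  exists a, a \in K /\ e a t.
Proof.
move=> [V0 Vc Vcut] sV tV st [Kin [K0 Kc] Kcl].
have /set0Pn[a aK] := K0.
have /and3P[aV as_ a_t] := Kin a aK.
have tK : t \notin K by apply/negP => /Kin /and3P[_ _]; rewrite eqxx.
have ts : t != s by rewrite eq_sym.
have [x [y [xK yK /and3P[exy _ yV']]]] := connect_exit (Vcut s a t aV tV as_ ts) aK tK.
move: yV'; rewrite in_setD1 => /andP[ys yV].
have := Kcl x y xK yV exy; rewrite (negbTE yK) (negbTE ys) /= => /eqP yt.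
by exists x; rewrite -yt.
Qed.

Lemma mk_cycle (f : nat -> T) n : 4 <= n ->
  (forall i j, i < j -> j < n -> f i != f j) ->
  (forall i j, i < j -> j < n -> e (f i) (f j) = (j == i.+1) || ((i == 0) && (j == n.-1))) ->
  induced_cycle e (mkseq f n).
Proof.
move=> n4 fd fa; split; [ | by rewrite size_mkseq | ].
- rewrite map_inj_in_uniq ?iota_uniq // => i j; rewrite !mem_iota => /andP[_ hi] /andP[_ hj] fij.
  apply/eqP; case: (ltngtP i j) => // H.
  + by have := fd i j H hj; rewrite fij eqxx.
  + by have := fd j i H hi; rewrite fij eqxx.
- move=> i j; rewrite size_mkseq => hi hj x0; rewrite !nth_mkseq //.
  case: (ltngtP i j) => H.
  + rewrite fa //; case: (ltngtP j.+1 n) => H2.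
    * rewrite !modn_small //; lia.
    * lia.
    * rewrite H2 modnn modn_small; lia.
  + rewrite esym fa //; case: (ltngtP i.+1 n) => H2.
    * rewrite !modn_small //; lia.
    * lia.
    * rewrite H2 modnn modn_small; lia.
  + rewrite H eirr; case: (ltngtP j.+1 n) => H2.
    * rewrite !modn_small //; lia.
    * lia.
    * rewrite H2 modnn; lia.
Qed.


Lemma common_nb V s t K : chordal e -> e s t -> comp V s t K ->
  (exists a, a \in K /\ e s a) -> (exists b, b \in K /\ e b t) ->
  exists u, [/\ u \in K, e s u & e u t].
Proof.
move=> ch est [Kin [K0 Kc] Kcl] [a [aK sa]] [b [bK bt]].
have sK : s \notin K by apply/negP => /Kin /and3P[_]; rewrite eqxx.
have tK : t \notin K by apply/negP => /Kin /and3P[_ _]; rewrite eqxx.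
have [p [m [p0 pm pe]]] := connect_fpath (Kc a b aK bK).
have pK : forall i, i <= m -> p i \in K.
  elim=> [|i IH] im; first by rewrite p0.
  by have := pe i im => /and3P[].
have pe' : forall i, i < m -> e (p i) (p i.+1) by move=> i im; have := pe i im => /and3P[].
rewrite -p0 in sa; rewrite -pm in bt.
clear pe p0 pm.
elim/ltn_ind: m p pK sa bt pe' => m IH p pK sp pt pe.
case: (boolP [exists i : 'I_m, e s (p i.+1)]) => [/existsP[i si] | /existsPn n2].
  have im := ltn_ord i.
  apply: (IH (m - i.+1) _ (fun l => p (i.+1 + l))); first by slia.
  - move=> l lm; apply: pK; slia.
  - by rewrite addn0.
  - by have -> : i.+1 + (m - i.+1) = m by slia.
  - by move=> l lm; rewrite addnS; apply: pe; slia.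
case: (boolP [exists i : 'I_m, e (p i) t]) => [/existsP[i it] | /existsPn n3].
  have im := ltn_ord i.
  apply: (IH i im p) => //.
  - move=> l lm; apply: pK; slia.
  - move=> l lm; apply: pe; slia.
case: (boolP [exists i : 'I_m, [exists j : 'I_m.+1, (i.+2 <= j) && e (p i) (p j)]]) =>
    [/existsP[i /existsP[j /andP[ij ch']]] | /existsPn n4a].
  have im := ltn_ord i; have jm := ltn_ord j.
  pose d := j - i.+1.
  apply: (IH (m - d) _ (fun l => if l <= i then p l else p (l + d))); first by slia.
  - move=> l lm; case: ifP => _; apply: pK; slia.
  - by [].
  - have -> : (m - d <= i) = false by slia.
    by have -> : m - d + d = m by slia.
  - move=> l lm; case: (ltngtP l i) => H.
    + apply: pe; slia.
    + rewrite addSn; apply: pe; slia.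
    + by rewrite H; have -> : i.+1 + d = j by slia.
case: (boolP [exists i : 'I_m, [exists j : 'I_m.+1, (i < j) && (p i == p j)]]) =>
    [/existsP[i /existsP[j /andP[ij /eqP pij]]] | /existsPn n4b].
  have im := ltn_ord i; have jm := ltn_ord j.
  pose d := j - i.
  apply: (IH (m - d) _ (fun l => if l <= i then p l else p (l + d))); first by slia.
  - move=> l lm; case: ifP => _; apply: pK; slia.
  - by [].
  - case: (ltngtP j m) => H.
    + have -> : (m - d <= i) = false by slia.
      by have -> : m - d + d = m by slia.
    + slia.
    + have -> : m - d = i by slia.
      by rewrite leqnn pij H.
  - move=> l lm; case: (ltngtP l i) => H.
    + apply: pe; slia.
    + rewrite addSn; apply: pe; slia.
    + rewrite H; have -> : i.+1 + d = j.+1 by slia.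
      rewrite pij; apply: pe; slia.
case: m IH pK sp pt pe n2 n3 n4a n4b => [|m] IH pK sp pt pe n2 n3 n4a n4b.
  by exists (p 0); rewrite pK.
have n2' : forall i, i <= m -> ~~ e s (p i.+1) by move=> i im; exact: (n2 (Ordinal (im : i < m.+1))).
have n3' : forall i, i <= m -> ~~ e (p i) t by move=> i im; exact: (n3 (Ordinal (im : i < m.+1))).
have n4a' : forall i j, i <= m -> j <= m.+1 -> i.+2 <= j -> ~~ e (p i) (p j).
  move=> i j im jm ij; have := n4a (Ordinal (im : i < m.+1)).
  by move/existsPn => /(_ (Ordinal (jm : j < m.+2))) /=; rewrite ij.
have n4b' : forall i j, i <= m -> j <= m.+1 -> i < j -> p i != p j.
  move=> i j im jm ij; have := n4b (Ordinal (im : i < m.+1)).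
  by move/existsPn => /(_ (Ordinal (jm : j < m.+2))) /=; rewrite ij.
exfalso.
pose f l := if l == 0 then s else if l <= m.+2 then p l.-1 else t.
have f0 : f 0 = s by [].
have fp : forall l, 0 < l -> l <= m.+2 -> f l = p l.-1.
  move=> l l0 lm; rewrite /f; have -> : (l == 0) = false by slia.
  by rewrite lm.
have ft : f m.+3 = t.
  by rewrite /f /=; have -> : (m.+3 <= m.+2) = false by slia.
have st : s != t by apply/eqP => st; move: est; rewrite st eirr.
apply: (ch (mkseq f m.+4)); apply: mk_cycle => //.
- move=> i j ij jn; case: i ij => [|i] ij.
  + rewrite f0; case: (ltngtP j m.+3) => H; [ | exfalso; slia | ].
    * rewrite (fp j ltac:(slia) ltac:(slia)); apply/eqP => sp'; move: sK; rewrite sp' pK //; slia.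
    * by rewrite H ft.
  + rewrite (fp i.+1 ltac:(slia) ltac:(slia)); case: (ltngtP j m.+3) => H; [ | exfalso; slia | ].
    * rewrite (fp j ltac:(slia) ltac:(slia)); apply: n4b' => /=; slia.
    * rewrite H ft; apply/eqP => pt'; move: tK; rewrite -pt' pK //; slia.
- move=> i j ij jn; case: i ij => [|i] ij.
  + rewrite f0; case: (ltngtP j m.+3) => H; [ | exfalso; slia | ].
    * rewrite (fp j ltac:(slia) ltac:(slia)).
      case: j ij jn H => [|[|j]] ij jn H //=.
      rewrite (negbTE (n2' j _)); slia.
    * by rewrite H ft est; slia.
  + rewrite (fp i.+1 ltac:(slia) ltac:(slia)); case: (ltngtP j m.+3) => H; [ | exfalso; slia | ].
    * rewrite (fp j ltac:(slia) ltac:(slia)).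
      case: (ltngtP j i.+2) => H2; first slia.
      - rewrite (negbTE (n4a' _ _ _ _ _)) /=; slia.
      - rewrite H2 /= pe //; slia.
    * rewrite H ft /=.
      case: (ltngtP i m.+1) => H2; [ | exfalso; slia | ].
      - rewrite (negbTE (n3' _ _)); slia.
      - rewrite H2 /= pt; slia.
Qed.


Lemma find_z V : bicon V -> chordal e -> ~ has_K4_minor e ->
  forall n s t (K : {set T}), #|K| = n -> s \in V -> t \in V -> e s t -> comp V s t K ->
  exists z x y, [/\ z \in K, x \in V, y \in V, e x y &
                    forall w, w \in V -> e z w = (w == x) || (w == y)].
Proof.
move=> bV ch HK; elim/ltn_ind => n IH s t K Kn sV tV est cK.
have st : s != t by apply/eqP => st; move: est; rewrite st eirr.
have [a [aK a_t]] := comp_adj bV sV tV st cK.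
have ts : t != s by rewrite eq_sym.
have [b [bK b_s]] := comp_adj bV tV sV ts (comp_swap cK).
have sb : e s b by rewrite esym.
have [u [uK su ut]] := common_nb ch est cK (ex_intro _ b (conj bK sb)) (ex_intro _ a (conj aK a_t)).
have cK0 := cK; case: cK => Kin [K0 Kc] Kcl.
have sK : s \notin K by apply/negP => /Kin /and3P[_]; rewrite eqxx.
have tK : t \notin K by apply/negP => /Kin /and3P[_ _]; rewrite eqxx.
have uV : u \in V by have /and3P[] := Kin u uK.
case: (boolP [forall k in K, k == u]) => [/forall_inP Ku | /forall_inPn [k' k'K k'u]].
  exists u, s, t; split => //.
  move=> w wV; apply/idP/idP.
  - move=> euw; have := Kcl u w uK wV euw => /or3P[wK|->|->]; rewrite ?orbT //.
    by move: euw; rewrite (eqP (Ku w wK)) eirr.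
  - by case/orP => /eqP->; rewrite // esym.
pose K' := [set y | connect (rV (K :\ u)) k' y].
have k'K' : k' \in K' by rewrite inE connect0.
have K'sub : forall y, y \in K' -> y \in K :\ u.
  by move=> y; rewrite inE => /connect_in; apply; rewrite in_setD1 k'u k'K.
have K'cl : forall x y, x \in K' -> rV (K :\ u) x y -> y \in K'.
  move=> x y; rewrite !inE => xK' xy; exact: connect_trans xK' (connect1 xy).
have K'conn : induced_connected e K'.
  split; first by apply/set0Pn; exists k'.
  move=> x y xK' yK'.
  have cs := sym_connect_sym (rV_sym esym (K :\ u)).
  have cxy : connect (rV (K :\ u)) x y.
    apply: (@connect_trans _ _ k'); last by rewrite inE in yK'.
    by rewrite cs; rewrite inE in xK'.
  by have := connect_closedV cxy xK' K'cl.
have K'nb : forall x y, x \in K' -> y \in V -> e x y -> [|| y \in K', y == u, y == s | y == t].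
  move=> x y xK' yV exy; have xK : x \in K by have := K'sub x xK'; rewrite in_setD1 => /andP[].
  have := Kcl x y xK yV exy => /or3P[yK|->|->]; rewrite ?orbT //.
  case: (eqVneq y u) => [->|yu]; rewrite ?eqxx ?orbT //.
  by rewrite (K'cl x y xK') // /rV exy (K'sub x xK') in_setD1 yu yK.
have uK' : u \notin K' by apply/negP => /K'sub; rewrite in_setD1 eqxx.
have sK' : s \notin K' by apply/negP => /K'sub; rewrite in_setD1 (negbTE sK) andbF.
have tK' : t \notin K' by apply/negP => /K'sub; rewrite in_setD1 (negbTE tK) andbF.
have K'lt : #|K'| < n.
  rewrite -Kn; apply: proper_card; apply/properP; split; last by exists u.
  by apply/subsetP => y /K'sub; rewrite in_setD1 => /andP[].
have K'in : forall x, x \in K' -> [&& x \in V, x != s, x != t & x != u].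
  move=> x /K'sub; rewrite in_setD1 => /andP[xu /Kin /and3P[-> -> ->]]; by rewrite xu.
case: (boolP [exists x, (x \in K') && e x t]) => [/existsP[b' /andP[b'K' b't]] | /existsPn noT].
  case: (boolP [exists x, (x \in K') && e x s]) => [/existsP[a' /andP[a'K' a's]] | /existsPn noS].
  -
    exfalso; apply: HK.
    have [x [y [xK' yK' /and3P[exy _ yK]]]] := connect_exit (Kc k' u k'K uK) k'K' uK'.
    have yu : y = u.
      apply/eqP; apply/negPn/negP => yu.
      by move: yK'; rewrite (K'cl x y xK') // /rV exy (K'sub x xK') in_setD1 yu yK.
    have xu : e u x by rewrite esym -yu.
    apply: (mkK4 esym (ic1 e s) (ic1 e t) (ic1 e u) K'conn).
    + by rewrite disjoints1 inE.
    + by rewrite disjoints1 inE; apply/eqP => su'; move: sK; rewrite su' uK.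
    + by rewrite disjoints1.
    + by rewrite disjoints1 inE; apply/eqP => tu'; move: tK; rewrite tu' uK.
    + by rewrite disjoints1.
    + by rewrite disjoints1.
    + by exists s, t; split => //; rewrite inE.
    + by exists s, u; split => //; rewrite inE.
    + by exists s, a'; split => //; rewrite ?inE // esym.
    + by exists t, u; split => //; rewrite ?inE // esym.
    + by exists t, b'; split => //; rewrite ?inE // esym.
    + by exists u, x; split => //; rewrite inE.
  - have cK' : comp V t u K'.
      split => //.
      + by move=> x /K'in /and4P[-> _ -> ->].
      + move=> x y xK' yV exy; have := K'nb x y xK' yV exy.
        case/or4P => [->//|->|/eqP ys|->]; rewrite ?orbT //.
        by move: (noS x); rewrite xK' -ys exy.
    have [z [x [y [zK' xV yV exy Hz]]]] := IH #|K'| K'lt t u K' erefl tV uV ltac:(by rewrite esym) cK'.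
    by exists z, x, y; split => //; have := K'sub z zK'; rewrite in_setD1 => /andP[].
- have cK' : comp V s u K'.
    split => //.
    + by move=> x /K'in /and4P[-> -> _ ->].
    + move=> x y xK' yV exy; have := K'nb x y xK' yV exy.
      case/or4P => [->//|->|->|/eqP yt]; rewrite ?orbT //.
      by move: (noT x); rewrite xK' -yt exy.
  have [z [x [y [zK' xV yV exy Hz]]]] := IH #|K'| K'lt s u K' erefl sV uV su cK'.
  by exists z, x, y; split => //; have := K'sub z zK'; rewrite in_setD1 => /andP[].
Qed.



Lemma reroute U z a b : connect (rV U) a b -> a != z -> b != z ->
  (forall p q, rV U p z -> rV U z q -> p = q \/ e p q) -> connect (rV (U :\ z)) a b.
Proof.
move=> /connectP[sq Hp ->] az bz Hcl.
elim: {sq}(size sq) {-2}sq (leqnn (size sq)) a az Hp bz => [|n IH] [|c sq] //= Hs a az;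
  try exact: (fun _ _ => connect0 _ _).
case/andP=> ac Hp lz; rewrite /= in Hs.
case: (eqVneq c z) => [cz|cz].
  rewrite cz in ac; move: Hp lz; rewrite cz; case: sq Hs => [|d sq] Hs /=; first by rewrite eqxx.
  case/andP=> zd Hp lz; rewrite /= in Hs.
  have dz : d != z by apply/eqP => dz; move: zd; rewrite dz /rV eirr.
  have aU : a \in U by move: ac => /and3P[].
  have dU : d \in U by move: zd => /and3P[].
  case: (Hcl a d ac zd) => [ad|ad].
    subst d; apply: IH => //; slia.
  apply: connect_trans (connect1 _) (IH sq _ d dz Hp lz); last by slia.
  by rewrite /rV ad !in_setD1 az dz aU dU.
apply: connect_trans (connect1 _) (IH sq _ c cz Hp lz); last by slia.
move: ac => /and3P[ac aU cU].
by rewrite /rV ac !in_setD1 az cz aU cU.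
Qed.

Lemma bicon_minus V z x y : bicon V -> z \in V -> x \in V -> y \in V -> e x y ->
  (forall w, w \in V -> e z w = (w == x) || (w == y)) -> 2 < #|V| -> bicon (V :\ z).
Proof.
move=> [V0 Vc Vcut] zV xV yV exy Hz V3.
split.
- rewrite -card_gt0; have := cardsD1 z V; rewrite zV; slia.
- move=> a b; rewrite !in_setD1 => /andP[az aV] /andP[bz bV]; exact: Vcut.
- move=> w a b; rewrite !in_setD1 => /andP[az aV] /andP[bz bV] aw bw.
  case: (eqVneq w z) => [->|wz].
    have -> : (V :\ z) :\ z = V :\ z by apply/setP => q; rewrite !in_setD1 andbA andbb.
    exact: Vcut.
  have -> : (V :\ z) :\ w = (V :\ w) :\ z.
    by apply/setP => q; rewrite !in_setD1 andbCA.
  apply: reroute (Vcut w a b aV bV aw bw) az bz _ => p q /and3P[pz pU _] /and3P[zq _ qU].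
  have pV : p \in V by move: pU; rewrite in_setD1 => /andP[].
  have qV : q \in V by move: qU; rewrite in_setD1 => /andP[].
  move: pz; rewrite esym Hz // => /orP[]/eqP->; move: zq; rewrite Hz // => /orP[]/eqP->;
    by [left | right; rewrite // esym].
Qed.

Lemma bicon_edge V : bicon V -> 1 < #|V| -> exists s t, [/\ s \in V, t \in V & e s t].
Proof.
move=> [V0 Vc Vcut] V2.
have /set0Pn[x xV] := V0.
have : 0 < #|V :\ x| by have := cardsD1 x V; rewrite xV; slia.
rewrite card_gt0 => /set0Pn[y]; rewrite in_setD1 => /andP[yx yV].
have xs : x \in [set x] by rewrite inE.
have ys : y \notin [set x] by rewrite inE.
have [a [b [aS bS /and3P[eab aV bV]]]] := connect_exit (Vc x y xV yV) xs ys.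
by exists a, b.
Qed.

Lemma P3P4_gen : chordal e -> ~ has_K4_minor e ->
  forall n (V : {set T}), #|V| = n -> bicon V -> #|V| = 1 \/ two_tree_on e V.
Proof.
move=> ch HK; elim/ltn_ind => n IH V Vn bV.
case: (ltngtP n 2) => Hn.
- case: n IH Vn Hn => [|[|//]] IH Vn Hn; last by left.
  by case: bV => V0 _ _; move: V0; rewrite -card_gt0 Vn.
- have [s [t [sV tV est]]] := bicon_edge bV ltac:(slia).
  have st : s != t by apply/eqP => st; move: est; rewrite st eirr.
  have [c cV cst] : exists2 c, c \in V & c \notin [set s; t].
    case: (boolP (V \subset [set s; t])) => [sub|/subsetPn //].
    by have := subset_leq_card sub; rewrite cards2 st Vn; slia.
  pose W := V :\: [set s; t].
  have cW : c \in W by rewrite in_setD cst cV.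
  pose K := [set y | connect (rV W) c y].
  have cK : comp V s t K.
    have Kcl' : forall x y, x \in K -> rV W x y -> y \in K.
      move=> x y; rewrite !inE => xK xy; exact: connect_trans xK (connect1 xy).
    split.
    + move=> x; rewrite inE => /connect_in /(_ cW); rewrite in_setD in_set2 negb_or.
      by case/andP=> /andP[-> ->] ->.
    + split; first by apply/set0Pn; exists c; rewrite inE connect0.
      move=> x y xK yK.
      have cs := sym_connect_sym (rV_sym esym W).
      have cxy : connect (rV W) x y.
        apply: (@connect_trans _ _ c); last by rewrite inE in yK.
        by rewrite cs; rewrite inE in xK.
      by have := connect_closedV cxy xK Kcl'.
    + move=> x y xK yV exy; case: (eqVneq y s) => [->|ys]; rewrite ?eqxx ?orbT //.
      case: (eqVneq y t) => [->|yt]; rewrite ?eqxx ?orbT //.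
      have xW : x \in W by move: xK; rewrite inE => /connect_in; apply.
      rewrite (Kcl' x y xK) // /rV exy xW /=.
      by rewrite in_setD in_set2 (negbTE ys) (negbTE yt) yV.
  have [z [x [y [zK xV yV exy Hz]]]] := find_z bV ch HK erefl sV tV est cK.
  have zV : z \in V by case: cK => Kin _ _; have /and3P[] := Kin z zK.
  have bV' := bicon_minus bV zV xV yV exy Hz ltac:(slia).
  have V'n : #|V :\ z| = n.-1 by have := cardsD1 z V; rewrite zV; slia.
  right; case: (IH n.-1 ltac:(slia) (V :\ z) V'n bV') => [|tt]; first by rewrite V'n; slia.
  rewrite -(setD1K zV); apply: (tt_step (x := x) (y := y)) => //.
  + rewrite in_setD1 xV andbT; apply/eqP => zx; move: (Hz x xV); rewrite -zx eirr eqxx.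
    by [].
  + rewrite in_setD1 yV andbT; apply/eqP => zy; move: (Hz y yV); rewrite -zy eirr eqxx orbT.
    by [].
  + by rewrite in_setD1 eqxx.
  + by move=> w; rewrite in_setD1 => /andP[_ wV]; exact: Hz.
- rewrite Hn in Vn; have [s [t [sV tV est]]] := bicon_edge bV ltac:(slia).
  have st : s != t by apply/eqP => st; move: est; rewrite st eirr.
  right; have -> : V = [set s; t].
    apply/eqP; rewrite eq_sym eqEcard cards2 st Vn andbT.
    by apply/subsetP => q; rewrite in_set2 => /orP[]/eqP->.
  exact: tt_base.
Qed.

Lemma P3P4 : chordal e -> biconnected e -> ~ has_K4_minor e -> is_K1 T \/ two_tree e.
Proof.
move=> ch [[V0 Vc] Hcut] HK.
have bV : bicon [set: T].
  split => // w x y _ _ xw yw.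
  have H : connect (fun a b => [&& e a b, a != w & b != w]) x y.
    apply/negPn/negP => nc; apply: (Hcut w); by exists x, y; split.
  rewrite (@eq_connect _ _ (fun a b => [&& e a b, a != w & b != w])) //.
  by move=> a b; rewrite /rV !in_setD1 !in_setT !andbT.
case: (P3P4_gen ch HK erefl bV) => [H|H]; [left|right] => //.
by rewrite /is_K1 -cardsT.
Qed.

End Work3.

Theorem lemma5p2 (T : finType) (e : rel T) :
  simple_graph e -> biconnected e -> ~ has_K4_minor e ->
  let P1 := exists v, exists o, one_perfect e o /\ sink o v in
  let P2 := forall v, exists o, one_perfect e o /\ sink o v in
  let P3 := chordal e in
  let P4 := is_K1 T \/ two_tree e in
  [/\ (P1 <-> P2), (P2 <-> P3) & (P3 <-> P4)].
Proof.
move=> [esym eirr] Hb HK P1 P2 P3 P4.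
have h21 : P2 -> P1.
  move=> H; have [[V0 _] _] := Hb; have /set0Pn[v _] := V0.
  by exists v; exact: H.
have h13 : P1 -> P3 := P1P3 esym (proj1 Hb) HK.
have h34 : P3 -> P4 := fun H => P3P4 esym eirr H Hb HK.
have h42 : P4 -> P2 := P4P2 esym eirr.
by split; split; auto.
Qed.
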